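(* Let $\psi\in\mathbf{\Psi}_n$. Then the dual norm of $|\!|\!|\cdot|\!|\!|_\psi$ satisfies, for all $(x^*_1,\ldots,x^*_n)\in(X^n)^*\cong(X^* )^n$, $$|\!|\!|(x^*_1,\ldots,x^*_n)|\!|\!|_{\psi} =\max_{(t_1,\ldots,t_n)\in\Omega_n}\frac{\sum_{i=1}^nt_i\|x^*_i\|}{\psi (t_1,\ldots,t_{n})}.$$
   Context: Let $(X,\|\cdot\|)$ be a normed vector space, $n\ge2$; the dual norm on $X^*$ is also denoted $\|\cdot\|$, and the dual norm of a norm on $X^n$ is denoted by the same symbol. $\Omega_n:=\{t\in\mathbb{R}^n\mid t_i\ge0,\ \sum_i t_i=1\}$, $\Omega_n^\circ:=\{t\in\Omega_n\mid t_i<1\ \forall i\}$. $\mathbf{\Psi}_n$ is the class of convex continuous $\psi:\Omega_n\to\mathbb{R}$ with (B1) $\psi(\mathbf{e}_i)=1$ for all standard unit vectors $\mathbf{e}_i$ and (B2) $\psi(t)\ge(1-t_i)\psi\big(\frac{t_1}{1-t_i},\ldots,\frac{t_{i-1}}{1-t_i},0,\frac{t_{i+1}}{1-t_i},\ldots,\frac{t_n}{1-t_i}\big)$ for all $t\in\Omega_n^\circ$, $i=1,\ldots,n$. For $\psi\in\mathbf{\Psi}_n$, $|\!|\!|x|\!|\!|_\psi:=\big(\sum_{i=1}^n\|x_i\|\big)\,\psi\big(\frac{\|x_1\|}{\sum_{i}\|x_i\|},\ldots,\frac{\|x_n\|}{\sum_{i}\|x_i\|}\big)$ for $x=(x_1,\ldots,x_n)\in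 X^n\setminus\{0\}$ and $|\!|\!|0|\!|\!|_\psi:=0$; this is a norm on $X^n$. *)

(* Defs.v *)
From HB Require Import structures.
From mathcomp Require Import all_boot all_order all_algebra.
From mathcomp Require Import all_classical all_reals all_analysis.
Set Implicit Arguments. Unset Strict Implicit. Unset Printing Implicit Defensive.
Import Order.TTheory GRing.Theory Num.Theory.
Import numFieldNormedType.Exports.
Local Open Scope classical_set_scope.
Local Open Scope ring_scope.

Definition Omega (R : realType) (n : nat) : set ('I_n -> R) :=
  [set t | (forall i, 0 <= t i) /\ \sum_(i < n) t i = 1].

Definition Omega_int (R : realType) (n : nat) : set ('I_n -> R) :=
  [set t | Omega t /\ (forall i, t i < 1)].

Definition drop_coord (R : realType) (n : nat) (t : 'I_n -> R) (i : 'I_n)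
  : 'I_n -> R := fun j => if j == i then 0 else t j / (1 - t i).

Definition PsiClass (R : realType) (n : nat) (psi : ('I_n -> R) -> R) : Prop :=
  (forall s t (l : R), Omega s -> Omega t -> 0 <= l <= 1 ->
     psi (fun j => l * s j + (1 - l) * t j) <= l * psi s + (1 - l) * psi t) /\
  (forall t, Omega t -> forall e : R, 0 < e -> exists2 d : R, 0 < d &
     forall s, Omega s -> (forall j, `|s j - t j| < d) -> `|psi s - psi t| < e) /\
  (* (B1) *)
  (forall i : 'I_n, psi (fun j => (j == i)%:R) = 1) /\
  (* (B2) *)
  (forall t, Omega_int t -> forall i : 'I_n,
     (1 - t i) * psi (drop_coord t i) <= psi t).

Definition psinorm (R : realType) (X : normedModType R) (n : nat)
  (psi : ('I_n -> R) -> R) (x : 'I_n -> X) : R :=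
  let S := \sum_(i < n) `|x i| in
  if S == 0 then 0 else S * psi (fun i => `|x i| / S).

Definition dualnorm (R : realType) (X : normedModType R) (f : X -> R) : R :=
  sup [set `|f x| | x in [set x : X | `|x| <= 1]].

(* dual norm of |||.|||_psi, evaluated at the functional
   x |-> sum_i xs_i(x_i) on X^n *)
Definition psi_dualnorm (R : realType) (X : normedModType R) (n : nat)
  (psi : ('I_n -> R) -> R) (xs : 'I_n -> X -> R) : R :=
  sup [set `|\sum_(i < n) xs i (x i)| | x in [set x : 'I_n -> X | psinorm psi x <= 1]].

Definition is_dual_elt (R : realType) (X : normedModType R) (f : X -> R) : Prop :=
  (forall (a : R) (u v : X), f (a *: u + v) = a * f u + f v) /\ continuous f.

(* Main.v *)
Require Import Defs.
From HB Require Import structures.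
From mathcomp Require Import all_boot all_order all_algebra.
From mathcomp Require Import all_classical all_reals all_analysis.
Import Order.TTheory GRing.Theory Num.Theory.
Import numFieldNormedType.Exports.
Local Open Scope classical_set_scope.
Local Open Scope ring_scope.
Set Implicit Arguments. Unset Strict Implicit.
From mathcomp Require Import ring lra.
Lemma Omega_le1 (R : realType) n (t : 'I_n -> R) : Omega t -> forall i, t i <= 1.
Proof.
move=> [t0 ts] i; rewrite -ts (bigD1 i) //= lerDl; exact: sumr_ge0.
Qed.

Lemma drop_Omega (R : realType) n (t : 'I_n -> R) i :
  Omega t -> t i < 1 -> Omega (drop_coord t i).
Proof.
move=> [t0 ts] ti1; have h : 0 < 1 - t i by rewrite subr_gt0.
split.
  move=> j; rewrite /drop_coord; case: eqP => // _.
  by rewrite divr_ge0 // ltW.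
rewrite (bigD1 i) //= /drop_coord eqxx add0r.
rewrite (eq_bigr (fun j => t j / (1 - t i))); last by move=> j /negPf ->.
rewrite -mulr_suml.
have -> : \sum_(j < n | j != i) t j = 1 - t i.
  by move: ts; rewrite (bigD1 i) //= => <-; rewrite addrC addrK.
by rewrite divff // gt_eqF.
Qed.

Lemma psi_pos (R : realType) n (psi : ('I_n -> R) -> R) : PsiClass psi ->
  forall t, Omega t -> 0 < psi t.
Proof.
move=> [_ [_ [B1 B2]]].
suff H : forall (k : nat) (t : 'I_n -> R), Omega t ->
    (#|[set i | t i != 0%R]%SET| <= k)%N -> 0 < psi t.
  by move=> t Ot; apply: (H #|'I_n|) => //; exact: max_card.
elim=> [|k IH] t Ot.
  rewrite leqn0 cards_eq0 => /eqP h; exfalso.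
  case: Ot => _; rewrite big1.
    by move/esym/eqP; rewrite oner_eq0.
  move=> i _; apply/eqP; apply: contraT => hi.
  have : i \in [set i | t i != 0]%SET by rewrite inE.
  by rewrite h inE.
move=> hk.
have [i1 /eqP ti1|] := pickP (fun i => t i == 1).
  have tE : t = (fun j => (j == i1)%:R).
    apply: funext => j; case: eqVneq => [->//|ji].
    case: Ot => t0 ts.
    have : \sum_(j0 < n | j0 != i1) t j0 = 0.
      by move: ts; rewrite (bigD1 i1) //= ti1 => /(congr1 (fun x => x - 1)); rewrite addrC addrK subrr.
    move/eqP; rewrite psumr_eq0; last by move=> *; exact: t0.
    by move/allP/(_ j (mem_index_enum _)); rewrite ji => /eqP.
  by rewrite tE B1 ltr01.
move=> tn1.
have tl1 : forall i, t i < 1.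
  by move=> i; rewrite lt_neqAle (@Omega_le1 _ _ _ Ot) andbT; move: (tn1 i) => /= ->.
have [i ti0] : exists i, t i != 0.
  apply/existsP; apply: contraT; rewrite negb_exists => /forallP h.
  case: Ot => _; rewrite big1; first by move/esym/eqP; rewrite oner_eq0.
  by move=> j _; move: (h j); rewrite negbK => /eqP.
have hp : 0 < psi (drop_coord t i).
  apply: IH; first exact: drop_Omega.
  have sub : ([set j | drop_coord t i j != 0] \subset [set j | t j != 0] :\ i)%SET.
    apply/fintype.subsetP => j; rewrite !inE /drop_coord.
    case: (eqVneq j i) => [->|ji]; rewrite ?eqxx //=.
    by rewrite mulf_eq0 negb_or => /andP[].
  rewrite -ltnS; apply: leq_ltn_trans (subset_leq_card sub) _.
  move: hk; rewrite (cardsD1 i) inE ti0 /= add1n ltnS //.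
have := B2 t (conj Ot tl1) i.
apply: lt_le_trans; apply: mulr_gt0 => //; by rewrite subr_gt0.
Qed.
Lemma lin0 (R : realType) (X : normedModType R) (f : X -> R) :
  is_dual_elt f -> f 0 = 0.
Proof.
move=> [hl _]; have := hl 1 0 0; rewrite scaler0 addr0 mul1r => /eqP.
by rewrite -subr_eq0 opprD addrA subrr add0r oppr_eq0 => /eqP.
Qed.

Lemma linZ (R : realType) (X : normedModType R) (f : X -> R) a u :
  is_dual_elt f -> f (a *: u) = a * f u.
Proof.
move=> hf; have := hf.1 a u 0; rewrite addr0 => ->; by rewrite lin0 // addr0.
Qed.

Lemma linD (R : realType) (X : normedModType R) (f : X -> R) u v :
  is_dual_elt f -> f (u + v) = f u + f v.
Proof. by move=> hf; have := hf.1 1 u v; rewrite scale1r mul1r. Qed.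

Lemma linN (R : realType) (X : normedModType R) (f : X -> R) u :
  is_dual_elt f -> f (- u) = - f u.
Proof. by move=> hf; rewrite -scaleN1r linZ // mulN1r. Qed.

Lemma lin_bounded (R : realType) (X : normedModType R) (f : X -> R) :
  is_dual_elt f -> exists C : R, forall x : X, `|x| <= 1 -> `|f x| <= C.
Proof.
move=> hf; have := hf.2 0.
move=> /cvgrPdist_lt /(_ 1 ltr01) /nbhs_ballP [d d0 hd].
exists (2 / d) => x x1.
have hb : ball (0 : X) d ((d / 2) *: x).
  rewrite -ball_normE /ball_ /= sub0r normrN normrZ.
  rewrite gtr0_norm ?divr_gt0 //.
  apply: (le_lt_trans (ler_wpM2l _ x1)); first by rewrite ltW ?divr_gt0.
  by rewrite mulr1 ltr_pdivrMr // ltr_pMr // ltr1n.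
have := hd _ hb; rewrite /= lin0 // sub0r normrN linZ // normrM gtr0_norm ?divr_gt0 //.
move=> h; rewrite -(@ler_pM2l _ (d / 2)) ?divr_gt0 //.
have -> : d / 2 * (2 / d) = 1 by field; rewrite gt_eqF.
exact: ltW.
Qed.

Lemma dn_has_sup (R : realType) (X : normedModType R) (f : X -> R) :
  is_dual_elt f -> has_sup [set `|f x| | x in [set x : X | `|x| <= 1]].
Proof.
move=> hf; split.
  by exists 0, 0; rewrite /= ?normr0 ?ler01 // lin0 // normr0.
have [C hC] := lin_bounded hf.
by exists C => _ [x /= x1 <-]; exact: hC.
Qed.

Lemma dn_ge0 (R : realType) (X : normedModType R) (f : X -> R) :
  is_dual_elt f -> 0 <= dualnorm f.
Proof.
move=> hf; apply: le_trans (sup_upper_bound (dn_has_sup hf) _).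
  exact: lexx.
by exists 0; rewrite /= ?normr0 ?ler01 // lin0 // normr0.
Qed.

Lemma dn_bound (R : realType) (X : normedModType R) (f : X -> R) u :
  is_dual_elt f -> `|f u| <= dualnorm f * `|u|.
Proof.
move=> hf; have [->|u0] := eqVneq u 0.
  by rewrite lin0 // !normr0 mulr0.
have nu : 0 < `|u| by rewrite normr_gt0.
have h : `|f (`|u|^-1 *: u)| <= dualnorm f.
  apply: (sup_upper_bound (dn_has_sup hf)); exists (`|u|^-1 *: u) => //=.
  by rewrite normrZ normfV normr_id mulVf ?gt_eqF.
move: h; rewrite linZ // normrM normfV normr_id => h.
rewrite -(@ler_pM2l _ (`|u|^-1)) ?invr_gt0 // (mulrC (dualnorm f)) mulrA.
by rewrite mulVf ?gt_eqF // mul1r.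
Qed.

Lemma dn_approx (R : realType) (X : normedModType R) (f : X -> R) (e : X) :
  is_dual_elt f -> e != 0 -> forall eps : R, 0 < eps ->
  exists u : X, `|u| = 1 /\ dualnorm f - eps < f u.
Proof.
move=> hf e0 eps eps0.
have [y [x /= x1 <-] hy] := sup_adherent eps0 (dn_has_sup hf).
have [x' [x'1 fx']] : exists x' : X, `|x'| <= 1 /\ f x' = `|f x|.
  have [fx0|fx0] := leP 0 (f x).
    by exists x; rewrite ger0_norm.
  by exists (- x); rewrite normrN linN // ltr0_norm.
have [x'E|x'0] := eqVneq x' 0.
  move: fx'; rewrite x'E lin0 // => fx0.
  have ne : 0 < `|e| by rewrite normr_gt0.
  pose w := `|e|^-1 *: e.
  have w1 : `|w| = 1 by rewrite normrZ normfV normr_id mulVf ?gt_eqF.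
  have [fw|fw] := leP 0 (f w).
    exists w; split => //; apply: lt_le_trans fw; by rewrite -fx0 in hy.
  exists (- w); rewrite normrN linN //; split => //.
  rewrite -fx0 in hy; apply: lt_le_trans hy _; rewrite oppr_ge0; exact: ltW.
have nx : 0 < `|x'| by rewrite normr_gt0.
exists (`|x'|^-1 *: x'); split.
  by rewrite normrZ normfV normr_id mulVf ?gt_eqF.
rewrite linZ // fx'; apply: lt_le_trans hy _.
rewrite ler_peMl // ?normr_ge0 // invf_ge1 //.
Qed.
Lemma ball_coord (R : realType) n (p v : 'rV[R]_n) d :
  ball p d v -> forall i, `|p ord0 i - v ord0 i| < d.
Proof.
rewrite -ball_normE /ball_ /= => h i; apply: le_lt_trans h.
have -> : p ord0 i - v ord0 i = (p - v) ord0 i by rewrite !mxE.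
have /mapP[j Hj ->] : `|(p - v) ord0 i| \in [seq `|(p - v) x.1 x.2| | x : 'I_1 * 'I_n].
  by apply/mapP; exists (ord0, i) => //=; rewrite mem_enum.
by rewrite [leRHS]/Num.norm /= mx_normrE; apply/bigmax_geP; right => /=; exists j.
Qed.

Lemma coord_ball (R : realType) n (p v : 'rV[R]_n) d : 0 < d ->
  (forall i, `|p ord0 i - v ord0 i| < d) -> ball p d v.
Proof.
move=> d0 h; rewrite -ball_normE /ball_ /= [ltLHS]/Num.norm /= mx_normrE.
apply/bigmax_ltP; split => // -[i j] _ /=.
by rewrite (ord1 i) !mxE; exact: h.
Qed.

Definition OmegaV (R : realType) n : set 'rV[R]_n :=
  [set v | Omega (fun i => v ord0 i)].

Lemma OmegaV_closed (R : realType) n : closed (@OmegaV R n).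
Proof.
move=> p clp.
have approx : forall e : R, 0 < e -> exists v, OmegaV v /\
    forall i, `|p ord0 i - v ord0 i| < e.
  move=> e e0; have [v [Av bv]] := clp _ (nbhsx_ballx p e e0).
  by exists v; split => //; exact: ball_coord.
split.
  move=> i; have [//|hneg] := leP 0 (p ord0 i).
  have hp : 0 < - p ord0 i by rewrite oppr_gt0.
  have [v [[v0 _] hv]] := approx _ hp.
  by have := hv i; have := v0 i; rewrite ltr_norml => ? /andP[? ?]; lra.
apply/eqP; rewrite -subr_eq0 -normr_le0.
apply/ler_addgt0Pr => e e0; rewrite add0r.
have ne : (0 < n.+1%:R :> R) by rewrite ltr0n.
have hp : 0 < e / n.+1%:R by rewrite divr_gt0.
have [v [[_ vs] hv]] := approx _ hp.
have -> : \sum_(i < n) p ord0 i - 1 = \sum_(i < n) (p ord0 i - v ord0 i).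
  by rewrite sumrB vs.
apply: le_trans (ler_norm_sum _ _ _) _.
apply: (@le_trans _ _ (\sum_(i < n) (e / n.+1%:R))).
  by apply: ler_sum => i _; exact: ltW.
rewrite sumr_const card_ord.
rewrite -[_ *+ n]mulr_natr mulrAC ler_pdivrMr // ler_pM2l // ler_nat; exact: leqnSn.
Qed.

Lemma OmegaV_compact (R : realType) n : compact (@OmegaV R n).
Proof.
apply: bounded_closed_compact; last exact: OmegaV_closed.
exists 1; split => // M M1 v Av.
rewrite /= [leLHS]/Num.norm /= mx_normrE; apply/bigmax_leP; split.
  by apply: le_trans (ltW M1); exact: ler01.
move=> -[i j] _ /=; rewrite (ord1 i); apply: le_trans (ltW M1).
case: Av => v0 vs; rewrite ger0_norm //.
rewrite -vs (bigD1 j) //= lerDl; exact: sumr_ge0.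
Qed.

Lemma g_cont (R : realType) n (psi : ('I_n -> R) -> R) (c : 'I_n -> R) :
  PsiClass psi -> (forall t, Omega t -> 0 < psi t) ->
  {within @OmegaV R n, continuous
    (fun v : 'rV[R]_n => (\sum_(i < n) v ord0 i * c i) / psi (fun i => v ord0 i))}.
Proof.
move=> [_ [pc _]] ppos; apply/subspace_continuousP => p Ap.
have hpsi : (fun v : 'rV[R]_n => psi (fun i => v ord0 i)) @ within (@OmegaV R n) (nbhs p)
    --> psi (fun i => p ord0 i).
  apply/cvgrPdist_lt => e e0; rewrite near_withinE.
  have [d d0 hd] := pc _ Ap e e0.
  apply/nbhs_ballP; exists d => // v bv Av.
  rewrite distrC; apply: hd => // j; rewrite distrC; exact: ball_coord.
have hphi : (fun v : 'rV[R]_n => \sum_(i < n) v ord0 i * c i) @ within (@OmegaV R n) (nbhs p)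
    --> \sum_(i < n) p ord0 i * c i.
  apply/cvgrPdist_lt => e e0; rewrite near_withinE.
  pose C := \sum_(i < n) `|c i| + 1.
  have C0 : 0 < C by rewrite ltr_wpDl ?sumr_ge0 // => *; exact: normr_ge0.
  apply/nbhs_ballP; exists (e / C); first exact: divr_gt0.
  move=> v bv Av; rewrite -sumrB.
  apply: le_lt_trans (ler_norm_sum _ _ _) _.
  apply: (@le_lt_trans _ _ (\sum_(i < n) (e / C) * `|c i|)).
    apply: ler_sum => i _; rewrite -mulrBl normrM ler_wpM2r //.
    exact: ltW (ball_coord bv i).
  rewrite -mulr_sumr mulrAC ltr_pdivrMr // ltr_pM2l //.
  by rewrite /C ltrDl.
have hne : psi (fun i => p ord0 i) != 0 by rewrite gt_eqF // ppos.
exact: (cvgM hphi (cvgV hne hpsi)).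
Qed.

Lemma psinorm_ge0 (R : realType) (X : normedModType R) n (psi : ('I_n -> R) -> R)
  (hpsi : PsiClass psi) (x : 'I_n -> X) : 0 <= psinorm psi x.
Proof.
rewrite /psinorm /=; case: ifPn => // S0; apply: mulr_ge0.
  by apply: sumr_ge0 => *; exact: normr_ge0.
apply/ltW/(psi_pos hpsi); split.
  by move=> i; apply: divr_ge0 => //; apply: sumr_ge0 => *; exact: normr_ge0.
by rewrite -mulr_suml divff.
Qed.

Unset Implicit Arguments.

Theorem theorem3p1 (R : realType) (X : normedModType R) (n : nat)
  (hn : (2 <= n)%N) (psi : ('I_n -> R) -> R) (hpsi : PsiClass psi)
  (xs : 'I_n -> X -> R) (hxs : forall i, is_dual_elt (xs i)) :
  let F := fun t : 'I_n -> R => (\sum_(i < n) t i * dualnorm (xs i)) / psi t in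
  (exists2 t0, Omega t0 & psi_dualnorm psi xs = F t0) /\
  (forall t, Omega t -> F t <= psi_dualnorm psi xs).
Proof.
move=> F.
have ppos := psi_pos hpsi.
set c := fun i => dualnorm (xs i).
have c0 : forall i, 0 <= c i by move=> i; exact: dn_ge0.
have Fge0 : forall t, Omega t -> 0 <= F t.
  move=> t Ot; apply: divr_ge0; last exact/ltW/ppos.
  by apply: sumr_ge0 => i _; apply: mulr_ge0; [exact: Ot.1|exact: c0].
pose i0 : 'I_n := Ordinal (ltnW hn).
have A0 : (@OmegaV R n) !=set0.
  exists (\row_j ((j == i0)%:R : R)); split.
    by move=> i; rewrite mxE ler0n.
  rewrite (bigD1 i0) //= mxE eqxx big1 ?addr0 // => j ji.
  by rewrite mxE (negPf ji).
have [v0 Av0 hmax] := EVT_max_rV A0 (@OmegaV_compact R n) (@g_cont R n psi c hpsi ppos).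
pose t0 := fun i => v0 ord0 i.
have Ot0 : Omega t0 by move: Av0; rewrite inE.
have Fmax : forall t, Omega t -> F t <= F t0.
  move=> t Ot; have := hmax (\row_j t j).
  have Fg : forall v : 'rV[R]_n, (\sum_(i < n) v ord0 i * c i) / psi (fun i => v ord0 i)
     = F (fun i => v ord0 i) by [].
  have ht : (fun i => (\row_j t j) ord0 i) = t by apply: funext => i; rewrite mxE.
  rewrite !Fg ht; apply; rewrite inE /OmegaV /=; by rewrite ht.
have ub : forall x : 'I_n -> X, psinorm psi x <= 1 ->
    `|\sum_(i < n) xs i (x i)| <= F t0.
  move=> x hx.
  apply: le_trans (ler_norm_sum _ _ _) _.
  apply: (@le_trans _ _ (\sum_(i < n) c i * `|x i|)).
    by apply: ler_sum => i _; exact: dn_bound.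
  set S := \sum_(i < n) `|x i|.
  have S0 : 0 <= S by apply: sumr_ge0 => *; exact: normr_ge0.
  have [/eqP SE|Sn0] := eqVneq S 0.
    move: SE; rewrite psumr_eq0 => [/allP hall|]; last by move=> *; exact: normr_ge0.
    rewrite big1 ?Fge0 // => i _.
    by move: (hall i (mem_index_enum _)) => /eqP ->; rewrite mulr0.
  pose t := fun i => `|x i| / S.
  have Ot : Omega t.
    split; first by move=> i; apply: divr_ge0.
    by rewrite -mulr_suml divff.
  have pn : psinorm psi x = S * psi t by rewrite /psinorm /= (negPf Sn0).
  have -> : \sum_(i < n) c i * `|x i| = psinorm psi x * F t.
    rewrite pn /F -mulrA (mulrC (psi t)) mulfVK ?gt_eqF ?ppos //.
    rewrite mulr_sumr; apply: eq_bigr => i _.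
    by rewrite /t /c; field.
  apply: le_trans (Fmax _ Ot).
  have := psinorm_ge0 hpsi x; have := Fge0 _ Ot; nra.
set E := [set `|\sum_(i < n) xs i (x i)| | x in [set x : 'I_n -> X | psinorm psi x <= 1]].
have E0 : E 0.
  exists (fun _ => 0) => /=.
    by rewrite /psinorm /= big1 ?eqxx ?ler01 // => *; rewrite normr0.
  by rewrite big1 ?normr0 // => i _; rewrite lin0.
have hsE : has_sup E.
  split; first by exists 0.
  by exists (F t0) => _ [x hx <-]; exact: ub.
have pd0 : 0 <= psi_dualnorm psi xs by exact: sup_upper_bound hsE _ E0.
have lb : forall t, Omega t -> F t <= psi_dualnorm psi xs.
  move=> t Ot.
  have pt := ppos _ Ot.
  have [[e e0]|noe] := pselect (exists e : X, e != 0).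
    apply/ler_addgt0Pr => d d0.
    have dp : 0 < d * psi t by apply: mulr_gt0.
    have [u hu] := choice (fun i => dn_approx (hxs i) e0 dp).
    pose x := fun i => (t i / psi t) *: u i.
    have nx : forall i, `|x i| = t i / psi t.
      move=> i; rewrite normrZ (hu i).1 mulr1 ger0_norm //.
      by apply: divr_ge0; [exact: Ot.1|exact: ltW].
    have Sx : \sum_(i < n) `|x i| = (psi t)^-1.
      by under eq_bigr do rewrite nx; rewrite -mulr_suml Ot.2 mul1r.
    have px : psinorm psi x = 1.
      rewrite /psinorm /= Sx invr_eq0 gt_eqF //=.
      have -> : (fun i => `|x i| / (psi t)^-1) = t.
        by apply: funext => i; rewrite nx invrK mulfVK ?gt_eqF.
      by rewrite mulVf ?gt_eqF.
    have hE : E `|\sum_(i < n) xs i (x i)| by exists x => //=; rewrite px.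
    have := sup_upper_bound hsE hE; rewrite -/(psi_dualnorm psi xs).
    move=> h; apply: (le_trans _ (lerD h (lexx d))).
    apply: (le_trans _ (lerD (ler_norm _) (lexx d))).
    have -> : \sum_(i < n) xs i (x i) = \sum_(i < n) (t i / psi t) * xs i (u i).
      by apply: eq_bigr => i _; rewrite linZ.
    have -> : F t = \sum_(i < n) (t i / psi t) * c i.
      by rewrite /F mulr_suml; apply: eq_bigr => i _; rewrite mulrAC.
    have -> : d = \sum_(i < n) (t i / psi t) * (d * psi t).
      by rewrite -mulr_suml -mulr_suml Ot.2 mul1r mulrCA mulVf ?gt_eqF ?mulr1.
    rewrite -big_split /=; apply: ler_sum => i _.
    rewrite -mulrDr; apply: ler_wpM2l.
      by apply: divr_ge0; [exact: Ot.1|exact: ltW].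
    have := (hu i).2; rewrite -/(c i); lra.
  have cz : forall i, c i = 0.
    move=> i; apply/le_anti; rewrite c0 andbT.
    apply: ge_sup; first by exists 0, 0; rewrite /= ?normr0 ?ler01 // lin0 // normr0.
    move=> _ [y _ <-]; have -> : y = 0 by apply: contra_notP noe => ?; exists y; apply/eqP.
    by rewrite lin0 // normr0.
  rewrite /F big1 ?mul0r //.
  by move=> i _; have := cz i; rewrite /c => ->; rewrite mulr0.
split=> //; exists t0 => //; apply/le_anti; rewrite lb // andbT.
apply: ge_sup; first by exists 0.
by move=> _ [x hx <-]; exact: ub.
Qed.
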